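(* Let $\mathcal{T}$ be a finite set and let $\mathbf{p}_0, \mathbf{p}_1, \mathbf{q}$ be probability measures on $\mathcal{T}$. For probability measures $\mathbf{r},\mathbf{s}$ on $\mathcal{T}$ write $\mathbf{h}_{\mathbf{r},\mathbf{s}}(x) = \mathbf{s}(x) - \mathbf{r}(x)$. Let $\sqsubset$ be a strict total order on $\mathcal{T}$ such that $\mathbf{h}_{\mathbf{p}_0,\mathbf{q}}(x) > \mathbf{h}_{\mathbf{p}_0,\mathbf{q}}(x')$ implies $x \sqsubset x'$, and $\mathbf{h}_{\mathbf{p}_0,\mathbf{q}}(x) < \mathbf{h}_{\mathbf{p}_0,\mathbf{q}}(x')$ implies $x' \sqsubset x$. Suppose further that whenever $\mathbf{h}_{\mathbf{p}_0,\mathbf{p}_1}(x) > 0$ and $\mathbf{h}_{\mathbf{p}_0,\mathbf{p}_1}(y) \le 0$, we have $x \sqsubset y$. For a probability measure $\mathbf{p}$ on $\mathcal{T}$, let $X_\mathbf{p} \sim \mathbf{p}$ and $Y_\mathbf{q} \sim \mathbf{q}$ be independent and define $R_{\mathbf{p},\mathbf{q}}$ to be $0$ if $Y_\mathbf{q} \sqsubset X_\mathbf{p}$, $1$ if $X_\mathbf{p} \sqsubset Y_\mathbf{q}$, and an independent $\mathrm{Bernoulli}(1/2)$ random variable if $X_\mathbf{p} = Y_\mathbf{q}$. Then $\Pr[R_{\mathbf{p}_0,\mathbf{q}} = 0] \ge \Pr[R_{\mathbf{p}_1,\mathbf{q}} = 0]$. *)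

(* Defs.v *)
From mathcomp Require Import all_boot all_order all_algebra.
Set Implicit Arguments. Unset Strict Implicit. Unset Printing Implicit Defensive.
Import Order.TTheory GRing.Theory Num.Theory.
Local Open Scope ring_scope.

Definition is_prob (R : realFieldType) (T : finType) (p : T -> R) : Prop :=
  (forall x, 0 <= p x) /\ \sum_(x : T) p x = 1.

Definition hdiff (R : realFieldType) (T : finType) (r s : T -> R) (x : T) : R :=
  s x - r x.

Definition strict_total_order (T : finType) (lt : rel T) : Prop :=
  [/\ (forall x, ~~ lt x x),
      (forall x y z, lt x y -> lt y z -> lt x z) &
      (forall x y, x != y -> lt x y || lt y x)].

(* Pr[R_{p,q} = 0], where X ~ p, Y ~ q independent, R = 0 if Y ⊏ X,
   R = 1 if X ⊏ Y, and R ~ Bernoulli(1/2) independent if X = Y.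
   By independence this probability is
   sum_{x,y} p(x) q(y) ( [y ⊏ x] + 1/2 [x = y] ). *)
Definition prob_R0 (R : realFieldType) (T : finType) (lt : rel T)
    (p q : T -> R) : R :=
  \sum_(x : T) \sum_(y : T)
     p x * q y * ((if lt y x then 1 else 0) + (if x == y then 2^-1 else 0)).

(* Main.v *)
Require Import Defs.
From mathcomp Require Import all_boot all_order all_algebra.
Import Order.TTheory GRing.Theory Num.Theory.
Local Open Scope ring_scope.

Theorem lemmaA17 (R : realFieldType) (T : finType) (p0 p1 q : T -> R)
    (lt : rel T) :
  is_prob p0 -> is_prob p1 -> is_prob q ->
  strict_total_order lt ->
  (forall x x', hdiff p0 q x > hdiff p0 q x' -> lt x x') ->
  (forall x x', hdiff p0 q x < hdiff p0 q x' -> lt x' x) ->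
  (forall x y, hdiff p0 p1 x > 0 -> hdiff p0 p1 y <= 0 -> lt x y) ->
  prob_R0 lt p0 q >= prob_R0 lt p1 q.
Proof.
move=> [p0ge p0s] [p1ge p1s] [qge qs] [irr tr _] _ _ Hsep.
pose g (x y : T) : R := (if lt y x then 1 else 0) + (if x == y then 2^-1 else 0).
pose F x := \sum_(y : T) q y * g x y.
have PR : forall p, prob_R0 lt p q = \sum_(x : T) p x * F x.
  move=> p; rewrite /prob_R0; apply: eq_bigr => x _.
  rewrite /F mulr_sumr; apply: eq_bigr => y _; by rewrite mulrA.
have Fge : forall x, 0 <= F x.
  move=> x; apply: sumr_ge0 => y _; apply: mulr_ge0 => //.
  rewrite /g; apply: addr_ge0; case: ifP => _ //; by rewrite invr_ge0.
have Fmono : forall x x', lt x x' -> F x <= F x'.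
  move=> x x' lxx'; apply: ler_sum => y _; apply: ler_wpM2l => //.
  rewrite /g; case: (eqVneq x y) => [<-|nxy].
    rewrite lxx' (negbTE (irr _)); case: eqP => [E|_].
      by move: lxx'; rewrite E (negbTE (irr _)).
    rewrite add0r addr0 invf_le1 ?ler1n // ltr0n //.
  case: (eqVneq x' y) => [<-|nx'y].
    have -> : lt x' x = false by apply/negP => H; move: (irr x); rewrite (tr _ _ _ lxx' H).
    rewrite (negbTE (irr _)) add0r; apply: addr_ge0 => //; by rewrite invr_ge0.
  rewrite !addr0; case: ifP => Hyx; first by rewrite (tr _ _ _ Hyx lxx').
  by case: ifP.
pose h x := hdiff p0 p1 x.
pose c := \big[Num.max/0]_(x | 0 < h x) F x.
have cge : forall y, h y <= 0 -> c <= F y.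
  move=> y hy; rewrite /c; apply: (big_ind (fun m => m <= F y)) => //.
  - move=> a b Ha Hb; by rewrite ge_max Ha Hb.
  - move=> x hx; apply: Fmono; exact: Hsep.
have cle : forall x, 0 < h x -> F x <= c.
  move=> x hx; rewrite /c (bigD1 x) //=; by rewrite le_max lexx.
rewrite !PR -subr_ge0 -sumrB.
have : \sum_(x : T) (p1 x * F x - p0 x * F x) <= \sum_(x : T) h x * c.
  apply: ler_sum => x _; rewrite -mulrBl /h /hdiff.
  rewrite -subr_ge0 -mulrBr.
  case: (ltP 0 (p1 x - p0 x)) => H.
    by apply: mulr_ge0; [exact: ltW | rewrite subr_ge0; exact: cle].
  by apply: mulr_le0; [ | rewrite subr_le0; exact: cge].
have E : \sum_i (p1 i - p0 i) = 0 by rewrite sumrB p1s p0s subrr.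
rewrite -mulr_suml /h /hdiff E mul0r => H.
by rewrite sumrB subr_ge0; move: H; rewrite sumrB subr_le0.
Qed.
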